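(* Let $r\ge 1$ be a real parameter and let $G=(V,E)$ be a graph on $n\ge 2$ vertices with minimum degree at least $r\log n$. Then there exists $W\subseteq V$ with $|W|\ge 2$ such that every edge cut $(A,B)$ in $G[W]$ satisfies $$\Delta(A,B)\ge r\log \operatorname{imb}(A,B).$$
   Context: Graphs are simple and undirected; $\log$ is base $2$. For $W\subseteq V$, $G[W]$ is the subgraph of $G$ induced by $W$. An edge cut in $G[W]$ is a partition $(A,B)$ of $W$ into two nonempty sets. Its maximum degree is $$\Delta(A,B)=\max\Big\{\max_{a\in A}|\{\{a,b\}\in E: b\in B\}|,\ \max_{b\in B}|\{\{b,a\}\in E: a\in A\}|\Big\},$$ and its imbalance is $\operatorname{imb}(A,B)=\dfrac{|A|+|B|}{\min(|A|,|B|)}$. *)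

(* Defs.v *)
From mathcomp Require Import all_boot.
From Stdlib Require Import Reals.
Set Implicit Arguments. Unset Strict Implicit. Unset Printing Implicit Defensive.

Definition log2 (x : R) : R := (ln x / ln 2)%R.

Section Graph.
Variable T : finType.
Variable e : rel T.

Definition simple_graph : Prop := symmetric e /\ irreflexive e.

Definition deg (v : T) : nat := #|[set u | e v u]|.

Definition deg_in (S : {set T}) (x : T) : nat := #|[set u in S | e x u]|.

(* (A,B) is an edge cut of G[W]: a partition of W into two nonempty sets *)
Definition edge_cut (W A B : {set T}) : Prop :=
  [/\ A :|: B = W, [disjoint A & B], A != set0 & B != set0].

Definition cut_maxdeg (A B : {set T}) : nat :=
  maxn (\max_(a in A) deg_in B a) (\max_(b in B) deg_in A b).

Definition imb (A B : {set T}) : R :=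
  (INR (#|A| + #|B|) / INR (minn #|A| #|B|))%R.
End Graph.

(* Main.v *)
Require Import Defs.
From mathcomp Require Import all_boot.
From Stdlib Require Import Reals Lra Classical.

Section Aux.
Variable T : finType.
Variable e : rel T.

Lemma deg_in_split (W A B : {set T}) x :
  A :|: B = W -> [disjoint A & B] ->
  deg_in e W x = deg_in e A x + deg_in e B x.
Proof.
move=> hU hD; rewrite /deg_in.
have -> : [set u in W | e x u] = [set u in A | e x u] :|: [set u in B | e x u].
  by apply/setP=> u; rewrite !inE -hU inE; case: (u \in A); case: (u \in B); case: (e x u).
rewrite -[RHS]cardsUI.
have -> : [set u in A | e x u] :&: [set u in B | e x u] = set0.
  apply/setP=> u; rewrite !inE.
  move: (disjoint_setI0 hD) => /setP /(_ u); rewrite !inE.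
  by case: (u \in A); case: (u \in B); case: (e x u).

by rewrite cards0 addn0.
Qed.

Definition good r (W : {set T}) :=
  2 <= #|W| /\ forall w, w \in W -> (r * log2 (INR #|W|) <= INR (deg_in e W w))%R.

Lemma log2_div (a b : nat) : 0 < a -> 0 < b ->
  log2 (INR a / INR b) = (log2 (INR a) - log2 (INR b))%R.
Proof.
move=> ha hb.
have pa : (0 < INR a)%R by apply lt_0_INR; apply/ltP.
have pb : (0 < INR b)%R by apply lt_0_INR; apply/ltP.
rewrite /log2 /Rdiv ln_mult ?ln_Rinv //; last by apply Rinv_0_lt_compat.
lra.
Qed.

Lemma step r (W A B : {set T}) :
  irreflexive e -> good r W -> edge_cut W A B -> #|A| <= #|B| ->
  (INR (cut_maxdeg e A B) < r * log2 (imb A B))%R ->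
  good r A /\ #|A| < #|W|.
Proof.
move=> irr [hW2 hWd] [hU hD hA hB] hAB hv.
have hcard : #|W| = #|A| + #|B|.
  by rewrite -hU -cardsUI disjoint_setI0 // cards0 addn0.
have pA : 0 < #|A| by rewrite card_gt0.
have pB : 0 < #|B| by rewrite card_gt0.
have himb : imb A B = (INR #|W| / INR #|A|)%R.
  by rewrite /imb -hcard (minn_idPl hAB).
rewrite himb log2_div // in hv; last by rewrite hcard ltn_addr.
have key : forall a, a \in A ->
   (r * log2 (INR #|A|) < INR (deg_in e A a))%R.
  move=> a aA.
  have hs := @deg_in_split W A B a hU hD.
  have aW : a \in W by rewrite -hU inE aA.
  have hW := hWd a aW.
  rewrite hs plus_INR in hW.
  have hm : (INR (deg_in e B a) <= INR (cut_maxdeg e A B))%R.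
    apply le_INR; apply/leP; rewrite /cut_maxdeg.
    apply: leq_trans (leq_maxl _ _). by apply: leq_bigmax_cond.
  lra.
split; last by rewrite hcard -{1}[#|A|]addn0 ltn_add2l.
split; last by move=> w wA; apply Rlt_le, key.
rewrite ltnNge; apply/negP => h1.
have h1' : #|A| = 1 by apply/eqP; rewrite eqn_leq h1 pA.
have /card_gt0P [a aA] := pA.
have := key a aA.
have -> : deg_in e A a = 0.
  apply/eqP; rewrite -leqn0 -ltnS -h1' /deg_in.
  apply: (@leq_ltn_trans #|A :\ a|); last by rewrite (cardsD1 a A) aA.
  apply: subset_leq_card; apply/subsetP=> u; rewrite !inE => /andP [uA eau].
  rewrite uA andbT; apply/eqP=> ua; subst u; by rewrite irr in eau.
rewrite h1' /log2 /= ln_1. lra.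
Qed.

End Aux.

Theorem lemma2p2 (r : R) (T : finType) (e : rel T) :
  (1 <= r)%R ->
  simple_graph e ->
  (2 <= #|T|)%N ->
  (forall v : T, (r * log2 (INR #|T|) <= INR (deg e v))%R) ->
  exists W : {set T},
    (2 <= #|W|)%N /\
    forall A B : {set T}, edge_cut W A B ->
      (r * log2 (imb A B) <= INR (cut_maxdeg e A B))%R.
Proof.
move=> _ [sym irr] hT hdeg.
suff main : forall n (W : {set T}), #|W| <= n -> @good T e r W ->
  exists W : {set T}, (2 <= #|W|)%N /\
    forall A B : {set T}, edge_cut W A B ->
      (r * log2 (imb A B) <= INR (cut_maxdeg e A B))%R.
  apply: (main #|T| setT (max_card _)).
  split; first by rewrite cardsT.
  move=> w _; rewrite cardsT.
  have -> : deg_in e setT w = deg e w.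
    by rewrite /deg_in /deg; apply: eq_card => u; rewrite !inE.
  exact: hdeg.
elim=> [|n IH] W hn hg.
  by case: hg => h _; move: (leq_trans h hn).
case: (classic (forall A B : {set T}, edge_cut W A B ->
      (r * log2 (imb A B) <= INR (cut_maxdeg e A B))%R)) => hc.
  by exists W; split => //; case: hg.
have [A /not_all_ex_not [B hAB]] := not_all_ex_not _ _ hc.
have [hcut hv] : edge_cut W A B /\ (INR (cut_maxdeg e A B) < r * log2 (imb A B))%R.
  split; first by apply NNPP => h; apply hAB => /h.
  apply Rnot_le_lt => h; apply hAB => _; exact h.
case: (leqP #|A| #|B|) => hle.
  have [gA lt] := @step T e r _ _ _ irr hg hcut hle hv.
  apply: (IH A) => //; by rewrite -ltnS (leq_trans lt hn).
have hcut' : edge_cut W B A.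
  by case: hcut => hU hD hA hB; split => //; [rewrite setUC | rewrite disjoint_sym].
have hv' : (INR (cut_maxdeg e B A) < r * log2 (imb B A))%R.
  by rewrite /cut_maxdeg /imb maxnC minnC addnC.
have [gB lt] := @step T e r _ _ _ irr hg hcut' (ltnW hle) hv'.
apply: (IH B) => //; by rewrite -ltnS (leq_trans lt hn).
Qed.
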